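(* Let $1\le k\le n$. For any matrices $\mathcal{A}\in\Gamma_k$ and $\mathcal{B}\in\Gamma_k^*$ (in $\mathbb{S}^n$), $$\rho_k(\mathcal{A})\,\rho_k^*(\mathcal{B})\le \frac1n\,\mathcal{A}\cdot\mathcal{B},$$ where $\mathcal{A}\cdot\mathcal{B}=\sum_{i,j}a_{ij}b_{ij}=\operatorname{tr}(\mathcal{A}\mathcal{B})$.
   Context: $\mathbb{S}^n$ is the space of real symmetric $n\times n$ matrices. For $\lambda\in\mathbb{R}^n$, $\mathcal{S}_k(\lambda)=\sum_{i_1<\dots<i_k}\lambda_{i_1}\cdots\lambda_{i_k}$. $\Gamma_k=\{\lambda\in\mathbb{R}^n:\mathcal{S}_j(\lambda)>0,\ j=1,\dots,k\}$ and $\Gamma_k^*=\{\lambda\in\mathbb{R}^n:\lambda\cdot\mu\ge0\ \forall\mu\in\Gamma_k\}$. On $\Gamma_k$, $\rho_k(\lambda)=\big(\mathcal{S}_k(\lambda)/\binom nk\big)^{1/k}$; on $\Gamma_k^*$, $\rho_k^*(\lambda)=\inf\{\lambda\cdot\mu/n:\mu\in\Gamma_k,\ \rho_k(\mu)\ge1\}$. A matrix belongs to $\Gamma_k$ (resp. $\Gamma_k^*$) if its vector of eigenvalues does, and $\rho_k(\mathcal{A})$, $\rho_k^*(\mathcal{B})$ are evaluated at the eigenvalue vectors. *)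

(* Defs.v *)
From HB Require Import structures.
From mathcomp Require Import all_boot all_order all_algebra.
From mathcomp Require Import boolp classical_sets reals exp.
Set Implicit Arguments. Unset Strict Implicit. Unset Printing Implicit Defensive.
Import Order.TTheory GRing.Theory Num.Theory.
Local Open Scope ring_scope.
Local Open Scope classical_set_scope.

Section Defs.
Variables (R : realType) (n : nat).

Definition esym_k (k : nat) (l : 'I_n -> R) : R :=
  \sum_(I : {set 'I_n} | #|I| == k) \prod_(i in I) l i.

Definition Gamma (k : nat) (l : 'I_n -> R) : Prop :=
  forall j : nat, (1 <= j <= k)%N -> 0 < esym_k j l.

Definition dotv (l m : 'I_n -> R) : R := \sum_i l i * m i.

Definition Gamma_dual (k : nat) (l : 'I_n -> R) : Prop :=
  forall m, Gamma k m -> 0 <= dotv l m.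

Definition rho (k : nat) (l : 'I_n -> R) : R :=
  powR (esym_k k l / ('C(n, k))%:R) (k%:R^-1).

Definition rho_dual (k : nat) (l : 'I_n -> R) : R :=
  inf [set dotv l m / n%:R | m in [set m | Gamma k m /\ 1 <= rho k m]].

(* l is a vector of eigenvalues (with multiplicity) of A *)
Definition eigvec_of (A : 'M[R]_n) (l : 'I_n -> R) : Prop :=
  char_poly A = \prod_(i < n) ('X - (l i)%:P).

Definition sym_mx (A : 'M[R]_n) : Prop := A^T = A.

Definition frob (A B : 'M[R]_n) : R := \sum_i \sum_j A i j * B i j.

End Defs.

(* Main.v *)
Require Import Defs.
From HB Require Import structures.
From mathcomp Require Import all_boot all_order all_algebra.
From mathcomp Require Import boolp classical_sets reals exp.
From mathcomp Require Import perm complex.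
From mathcomp Require Import ring lra.
Import Order.TTheory GRing.Theory Num.Theory.
Local Open Scope complex_scope.
Local Open Scope sesquilinear_scope.
Local Open Scope ring_scope.
Set Implicit Arguments. Unset Strict Implicit. Unset Printing Implicit Defensive.

Lemma exists_max (R : realDomainType) (T : finType) (I : {set T}) (g : T -> R) :
  I != finset.set0 -> exists2 i0, i0 \in I & forall i, i \in I -> g i <= g i0.
Proof.
case/set0Pn => x xI.
case: (@real_arg_maxP R T x (mem I) g xI) => [i _|i0 i0I H]; first exact: num_real.
by exists i0 => // i /H.
Qed.

Lemma le_sum_term (R : numDomainType) (T : finType) (A : {set T}) (F : T -> R) i :
  i \in A -> (forall j, j \in A -> 0 <= F j) -> F i <= \sum_(j in A) F j.
Proof.
move=> iA H; rewrite (big_setD1 i) //= lerDl sumr_ge0 // => j.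
by rewrite in_setD1 => /andP[_ /H].
Qed.

Lemma sum0_nneg (R : numDomainType) (T : finType) (A : {set T}) (F : T -> R) i :
  i \in A -> (forall j, j \in A -> 0 <= F j) -> \sum_(j in A) F j = 0 -> F i = 0.
Proof.
move=> iA H s0; apply/eqP; rewrite eq_le H // andbT -s0; exact: le_sum_term.
Qed.

Lemma core (R : realFieldType) n (mu b : 'I_n -> R) m :
  forall (I J : {set 'I_n}) (P : 'I_n -> 'I_n -> R), #|I| = m -> #|J| = m ->
  (forall i j, i \in I -> j \in J -> 0 <= P i j) ->
  (forall i, i \in I -> \sum_(j in J) P i j = 1) ->
  (forall j, j \in J -> \sum_(i in I) P i j = 1) ->
  exists f : 'I_n -> 'I_n, [/\ {in J &, injective f}, (forall j, j \in J -> f j \in I) &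
   \sum_(j in J) b j * mu (f j) <= \sum_(i in I) \sum_(j in J) mu i * b j * P i j].
Proof.
elim: m => [|m IH] I J P cI cJ Pge0 Prow Pcol.
  move/cards0_eq: cI => ->; move/cards0_eq: cJ => ->.
  exists id; split; [by move=> x y; rewrite inE | by move=> j; rewrite inE | by rewrite !big_set0].
have [i0 i0I Hi0] : exists2 i0, i0 \in I & forall i, i \in I -> mu i <= mu i0.
  by apply: exists_max; rewrite -card_gt0 cI.
have [j0 j0J Hj0] : exists2 j0, j0 \in J & forall j, j \in J -> - b j <= - b j0.
  by apply: exists_max; rewrite -card_gt0 cJ.
set I' := I :\ i0; set J' := J :\ j0.
have cI' : #|I'| = m by move: cI; rewrite (cardsD1 i0) i0I add1n => -[].
have cJ' : #|J'| = m by move: cJ; rewrite (cardsD1 j0) j0J add1n => -[].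
have inI' i : i \in I' -> i \in I by rewrite in_setD1 => /andP[].
have inJ' j : j \in J' -> j \in J by rewrite in_setD1 => /andP[].
pose c i := P i j0; pose r j := P i0 j.
pose s := \sum_(j in J') r j.
have c0 i : i \in I' -> 0 <= c i by move=> /inI' iI; apply: Pge0.
have r0 j : j \in J' -> 0 <= r j by move=> /inJ' jJ; apply: Pge0.
have s0 : 0 <= s by apply: sumr_ge0.
have hs : P i0 j0 + s = 1 by rewrite -(Prow i0 i0I) [RHS](big_setD1 j0).
have hs' : P i0 j0 + \sum_(i in I') c i = 1 by rewrite -(Pcol j0 j0J) [RHS](big_setD1 i0).
have cs : \sum_(i in I') c i = s by apply: (addrI (P i0 j0)); rewrite hs hs'.
have cK i : i \in I' -> c i * s / s = c i.
  move=> iI; have [s_0|sn0] := eqVneq s 0; last by rewrite mulfK.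
  rewrite s_0 mulr0 mul0r; symmetry; apply: (sum0_nneg iI c0); by rewrite cs.
have rK j : j \in J' -> r j * s / s = r j.
  move=> jJ; have [s_0|sn0] := eqVneq s 0; last by rewrite mulfK.
  rewrite s_0 mulr0 mul0r; symmetry; exact: (sum0_nneg jJ r0).
pose P' i j := P i j + c i * r j / s.
have [f' [f'inj f'in f'le]] : exists f : 'I_n -> 'I_n, [/\ {in J' &, injective f}, (forall j, j \in J' -> f j \in I') &
   \sum_(j in J') b j * mu (f j) <= \sum_(i in I') \sum_(j in J') mu i * b j * P' i j].
  apply: IH => //.
  - move=> i j iI jJ; rewrite /P' addr_ge0 ?divr_ge0 ?mulr_ge0 ?c0 ?r0 //.
    by apply: Pge0; [apply: inI'|apply: inJ'].
  - move=> i iI; rewrite /P' big_split /=.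
    have -> : \sum_(j in J') c i * r j / s = c i * s / s by rewrite -mulr_suml -mulr_sumr.
    rewrite cK //.
    have := Prow i (inI' _ iI); rewrite (big_setD1 j0) //= -/J' => h.
    by rewrite -h addrC.
  - move=> j jJ; rewrite /P' big_split /=.
    have -> : \sum_(i in I') c i * r j / s = r j * s / s.
      by rewrite -!mulr_suml cs (mulrC s).
    rewrite rK //.
    have := Pcol j (inJ' _ jJ); rewrite (big_setD1 i0) //= -/I' => h.
    by rewrite -h addrC.
have inJ'' j : j \in J -> j != j0 -> j \in J' by move=> jJ jn; rewrite in_setD1 jn.
have fI'n j : j \in J' -> f' j != i0.
  by move=> /f'in; rewrite in_setD1 => /andP[].
exists (fun j => if j == j0 then i0 else f' j); split.
- move=> x y xJ yJ /=.
  case: eqVneq => [->|xn]; case: eqVneq => [->|yn] //.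
  + by move=> h; move: (fI'n y (inJ'' y yJ yn)); rewrite -h eqxx.
  + by move=> h; move: (fI'n x (inJ'' x xJ xn)); rewrite h eqxx.
  + by apply: f'inj; apply: inJ''.
- move=> j jJ /=; case: eqVneq => [_|jn]; first by [].
  by apply: inI'; apply: f'in; apply: inJ''.
rewrite (big_setD1 j0) //= eqxx -/J'.
rewrite (eq_bigr (fun j => b j * mu (f' j))); last first.
  by move=> j; rewrite in_setD1 => /andP[/negbTE -> _].
rewrite [X in _ <= X](big_setD1 i0) //= -/I' [\sum_(j in J) mu i0 * _ * _](big_setD1 j0) //= -/J'.
rewrite [\sum_(i in I') _](eq_bigr (fun i => mu i * b j0 * c i + \sum_(j in J') mu i * b j * P i j)); last first.
  by move=> i _; rewrite (big_setD1 j0).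
rewrite big_split /=.
move: f'le; rewrite /P'.
have -> : \sum_(i in I') \sum_(j in J') mu i * b j * (P i j + c i * r j / s) =
  \sum_(i in I') \sum_(j in J') mu i * b j * P i j + 
  (\sum_(i in I') mu i * c i) * (\sum_(j in J') b j * r j) / s.
  transitivity (\sum_(i in I') \sum_(j in J') mu i * b j * P i j +
     \sum_(i in I') \sum_(j in J') (mu i * c i) * (b j * r j) / s).
    rewrite -big_split; apply: eq_bigr => i _ /=.
    rewrite -big_split; apply: eq_bigr => j _ /=; ring.
  congr (_ + _).
  rewrite -[RHS]mulrA [RHS]mulr_suml; apply: eq_bigr => i _.
  rewrite [in RHS]mulr_suml [in RHS]mulr_sumr; apply: eq_bigr => j _; ring.
set X := \sum_(i in I') mu i * c i.
set Y := \sum_(j in J') b j * r j.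
set Z := \sum_(i in I') \sum_(j in J') mu i * b j * P i j.
set Z2 := \sum_(j in J') b j * mu (f' j).
have -> : \sum_(j in J') mu i0 * b j * P i0 j = mu i0 * Y.
  by rewrite /Y mulr_sumr; apply: eq_bigr => j _; rewrite /r; ring.
have -> : \sum_(i in I') mu i * b j0 * c i = b j0 * X.
  by rewrite /X mulr_sumr; apply: eq_bigr => i _; ring.
pose u := \sum_(i in I') c i * (mu i0 - mu i).
pose v := \sum_(j in J') r j * (b j0 - b j).
have u0 : 0 <= u.
  apply: sumr_ge0 => i iI; rewrite mulr_ge0 ?c0 // subr_ge0; exact/Hi0/inI'.
have v0 : v <= 0.
  rewrite /v -oppr_ge0 -sumrN; apply: sumr_ge0 => j jJ.
  rewrite -mulrN mulr_ge0 ?r0 // oppr_ge0 subr_le0.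
  by have := Hj0 j (inJ' _ jJ); rewrite lerN2.
have uE : u = s * mu i0 - X.
  rewrite /u /X -cs mulr_suml -sumrB; apply: eq_bigr => i _; ring.
have vE : v = s * b j0 - Y.
  rewrite /v /Y /s mulr_suml -sumrB; apply: eq_bigr => j _; ring.
have Pe : P i0 j0 = 1 - s by rewrite -hs; ring.
rewrite Pe.
have [s_0|sn0] := eqVneq s 0.
  have X0 : X = 0.
    rewrite /X big1 // => i iI; rewrite (sum0_nneg iI c0) ?mulr0 // cs //.
  have Y0 : Y = 0.
    rewrite /Y big1 // => j jJ; rewrite (sum0_nneg jJ r0) ?mulr0 //.
  rewrite X0 Y0 s_0 => h; lra.
have XY : X * Y / s = s * mu i0 * b j0 - mu i0 * v - b j0 * u + u * v / s.
  rewrite uE vE; field; exact: sn0.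
have uv : u * v / s <= 0.
  by apply: mulr_le0_ge0; [apply: mulr_ge0_le0 | rewrite invr_ge0].
rewrite XY => h.
rewrite uE vE in h uv XY *. lra.
Qed.
Section R1.
Variables (R : realType) (n : nat).

Lemma esym_comp j (l : 'I_n -> R) (g : 'I_n -> 'I_n) : injective g ->
  esym_k j (fun i => l (g i)) = esym_k j l.
Proof.
move=> ginj; rewrite /esym_k; symmetry; rewrite (reindex_inj (imset_inj ginj)) /=.
apply: eq_big => I; first by rewrite card_imset.
by move=> _; rewrite big_imset //; move=> x y _ _; apply: ginj.
Qed.

Lemma esym_scale j (l : 'I_n -> R) c :
  esym_k j (fun i => c * l i) = c ^+ j * esym_k j l.
Proof.
rewrite /esym_k mulr_sumr; apply: eq_bigr => I /eqP <-.
by rewrite big_split /= prodr_const.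
Qed.

Lemma rho_pos k (l : 'I_n -> R) : (1 <= k)%N -> (k <= n)%N -> Gamma k l -> 0 < rho k l.
Proof.
move=> k1 kn G; rewrite /rho powR_gt0 // divr_gt0 //; first by apply: G; rewrite k1 leqnn.
by rewrite ltr0n bin_gt0.
Qed.

Lemma rho_pow k (l : 'I_n -> R) : (1 <= k)%N -> (k <= n)%N -> Gamma k l ->
  rho k l ^+ k = esym_k k l / ('C(n, k))%:R.
Proof.
move=> k1 kn G; rewrite /rho -powR_mulrn ?powR_ge0 // -powRrM mulVf ?pnatr_eq0 -?lt0n //.
rewrite powRr1 // divr_ge0 // ?ltW //; first by apply: G; rewrite k1 leqnn.
Qed.


Lemma sum_setT (F : 'I_n -> R) : \sum_(i in [set: 'I_n]) F i = \sum_i F i.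
Proof. by apply: eq_bigl => i; rewrite finset.in_setT. Qed.

Lemma rho_dual_le k (b mu : 'I_n -> R) : Gamma_dual k b -> Gamma k mu -> 1 <= rho k mu ->
  rho_dual k b <= dotv b mu / n%:R.
Proof.
move=> Gb Gm rm; rewrite /rho_dual.
have hl : has_lbound [set dotv b m / n%:R | m in [set m | Gamma k m /\ 1 <= rho k m]].
  exists 0 => y [m [Gm' _] <-]; rewrite divr_ge0 //; exact: Gb.
by apply: (ge_inf hl); exists mu.
Qed.

Lemma real_main k (a b : 'I_n -> R) (P : 'I_n -> 'I_n -> R) (sg tau : 'I_n -> 'I_n) :
  (1 <= k)%N -> (k <= n)%N -> injective sg -> injective tau ->
  (forall i j, 0 <= P i j) -> (forall i, \sum_j P i j = 1) -> (forall j, \sum_i P i j = 1) ->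
  Gamma k a -> Gamma_dual k b ->
  rho k a * rho_dual k b <= n%:R^-1 * \sum_i \sum_j a (sg i) * b (tau j) * P i j.
Proof.
move=> k1 kn sinj tinj P0 Prow Pcol Ga Gb.
have [f [finj _ fle]] := @core _ _ (fun i => a (sg i)) (fun j => b (tau j)) n [set: 'I_n] [set: 'I_n] P
  (etrans (cardsT _) (card_ord n)) (etrans (cardsT _) (card_ord n)) (fun i j _ _ => P0 i j)
  (fun i _ => etrans (sum_setT _) (Prow i)) (fun j _ => etrans (sum_setT _) (Pcol j)).
move: fle; rewrite !sum_setT.
under [X in _ <= X]eq_bigr do rewrite sum_setT.
have finj' : injective f by move=> x y h; apply: finj; rewrite ?finset.in_setT.
pose g j := sg (f (invF tinj j)).
have ginj : injective g.
  by move=> x y /sinj /finj' /(can_inj (f_invF tinj)).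
rewrite (reindex_inj (can_inj (f_invF tinj))) /=.
under eq_bigr do rewrite f_invF.
rewrite -/g => hle.
set T := \sum_j b j * a (g j) in hle.
have rp := rho_pos k1 kn Ga.
set r := rho k a in rp *.
pose mu i := r^-1 * a (g i).
have emu j : esym_k j mu = r^-1 ^+ j * esym_k j a.
  by rewrite /mu esym_scale esym_comp.
have Gm : Gamma k mu.
  move=> j hj; rewrite emu mulr_gt0 ?exprn_gt0 ?invr_gt0 //; exact: Ga.
have rm : rho k mu = 1.
  rewrite /rho emu exprVn -mulrA -rho_pow // -/r mulVf ?powR1 //.
  by rewrite expf_neq0 // gt_eqF.
have := rho_dual_le Gb Gm; rewrite rm lexx => /(_ isT) hd.
have dm : dotv b mu = r^-1 * T.
  by rewrite /dotv /T mulr_sumr; apply: eq_bigr => j _; rewrite /mu; ring.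
apply: (le_trans (ler_wpM2l (ltW rp) hd)).
rewrite dm mulrA mulrA mulfV ?gt_eqF // mul1r mulrC.
by apply: ler_wpM2l => //; rewrite invr_ge0.
Qed.

End R1.
Lemma eig_perm (F : fieldType) n (d l : 'I_n -> F) :
  \prod_(i < n) ('X - (d i)%:P) = \prod_(i < n) ('X - (l i)%:P) ->
  exists p : 'S_n, forall i, d i = l (p i).
Proof.
move=> h.
have hp : perm_eq [tuple d i | i < n] [tuple l i | i < n].
  apply: prod_XsubC_eq; rewrite /= !big_map -!enumT !big_enum; exact: h.
have [p hp'] := tuple_permP hp.
exists p => i.
have := congr1 (fun t => tnth t i) (val_inj hp').
by rewrite !tnth_mktuple.
Qed.

Lemma char_poly_similar (F : fieldType) n (P D : 'M[F]_n) : P \in unitmx ->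
  char_poly (invmx P *m D *m P) = char_poly D.
Proof.
move=> Pu; rewrite /char_poly /char_poly_mx.
set Qp := map_mx polyC (invmx P); set Pp := map_mx polyC P.
have QP : Qp *m Pp = 1%:M by rewrite -map_mxM mulVmx // map_mx1.
have -> : 'X%:M - map_mx polyC (invmx P *m D *m P) = Qp *m ('X%:M - map_mx polyC D) *m Pp.
  rewrite !map_mxM mulmxBr mulmxBl -/Qp -/Pp; congr (_ - _).
  by rewrite scalar_mxC -mulmxA QP mulmx1.
rewrite !det_mulmx mulrC mulrA -det_mulmx mulmxE.
have -> : Pp * Qp = 1.
  by rewrite -mulmxE -map_mxM mulmxV // map_mx1.
by rewrite det1 mul1r.
Qed.

Section Cx.
Variable R : realType.
Notation rc := (real_complex R).

Lemma conjR (x : R) : (x%:C)^* = x%:C :> R[i].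
Proof. apply/CrealP. rewrite realE !lecR. exact: le_total. Qed.

Lemma normR (z : R[i]) : z * z^* = (complex.Re (z * z^*))%:C /\ 0 <= complex.Re (z * z^*).
Proof.
have hr : z * z^* \is Num.real by rewrite -normCK realX ?normr_real.
have e : (complex.Re (z * z^*))%:C = z * z^*  by rewrite complexRe; apply/Creal_ReP.
split; first by rewrite e.
by rewrite -ler0c e -normCK exprn_ge0.
Qed.

Lemma spectral_real n (A : 'M[R]_n) (l : 'I_n -> R) : A^T = A ->
  char_poly A = \prod_(i < n) ('X - (l i)%:P) ->
  exists (U : 'M[R[i]]_n) (p : 'S_n), U \is unitarymx /\
    map_mx rc A = U^t* *m diag_mx (\row_i (l (p i))%:C) *m U.
Proof.
move=> As hc.
set Ac := map_mx rc A.
have Act : Ac^t* = Ac.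
  apply/matrixP => i j; rewrite !mxE conjR; congr (_%:C).
  by rewrite -{1}As mxE.
have An : Ac \is normalmx by apply/normalmxP; rewrite Act.
have /orthomx_spectralP Ae := An.
set U := spectralmx Ac in Ae; set d := spectral_diag Ac in Ae.
have Uu : U \is unitarymx by apply: spectral_unitarymx.
have hcc : char_poly Ac = \prod_(i < n) ('X - (d 0 i)%:P).
  rewrite Ae char_poly_similar ?unitarymx_unit // char_poly_trig ?diag_mx_is_trig //.
  by apply: eq_bigr => i _; rewrite mxE eqxx mulr1n.
have : \prod_(i < n) ('X - (d 0 i)%:P) = \prod_(i < n) ('X - (rc (l i))%:P).
  rewrite -hcc -map_char_poly hc rmorph_prod; apply: eq_bigr => i _.
  exact: (map_polyXsubC rc).
move=> /eig_perm [p hp].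
exists U, p; split => //.
rewrite {1}Ae invmx_unitary //; congr (_ *m diag_mx _ *m _).
by apply/rowP => i; rewrite mxE hp.
Qed.

Lemma entry_conj n (M : 'M[R[i]]_n) (x : 'I_n -> R[i]) i j :
  (M^t* *m diag_mx (\row_k x k) *m M) i j = \sum_k (M k i)^* * x k * M k j.
Proof. by rewrite mxE; apply: eq_bigr => k _; rewrite mul_mx_diag !mxE. Qed.

Lemma quad_ex n (F : 'I_n -> 'I_n -> 'I_n -> 'I_n -> R[i]) :
  \sum_i \sum_j \sum_k \sum_l F i j k l = \sum_k \sum_l \sum_j \sum_i F i j k l.
Proof.
rewrite exchange_big /=.
under eq_bigr => j _ do (rewrite exchange_big /=; under eq_bigr => k _ do rewrite exchange_big /=).
rewrite exchange_big /=.
by under eq_bigr => k _ do rewrite exchange_big /=.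
Qed.


Lemma frob_DS n (A B : 'M[R]_n) (U V : 'M[R[i]]_n) (da db : 'I_n -> R) :
  B^T = B -> U \is unitarymx -> V \is unitarymx ->
  map_mx rc A = U^t* *m diag_mx (\row_i (da i)%:C) *m U ->
  map_mx rc B = V^t* *m diag_mx (\row_i (db i)%:C) *m V ->
  exists P : 'I_n -> 'I_n -> R, [/\ forall i j, 0 <= P i j, forall i, \sum_j P i j = 1,
     forall j, \sum_i P i j = 1 &
     frob A B = \sum_i \sum_j da i * db j * P i j].
Proof.
move=> Bs Uu Vu hA hB.
set W := U *m V^t*.
have Wu : W \is unitarymx by rewrite mul_unitarymx // trmxC_unitary.
have Wtu : W^t* \is unitarymx by rewrite trmxC_unitary.
pose P k l := complex.Re (W k l * (W k l)^*).
have PE k l : (P k l)%:C = W k l * (W k l)^* by rewrite /P -(normR (W k l)).1.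
exists P; split.
- by move=> k l; exact: (normR (W k l)).2.
- move=> k; apply: complexI; rewrite rmorph_sum /=.
  under eq_bigr do rewrite PE.
  have := congr1 (fun M : 'M[R[i]]_n => M k k) (elimT unitarymxP Wu); rewrite !mxE eqxx ?mulr1n /= => h; rewrite rmorph1 -h.
  by apply: eq_bigr => l _; rewrite !mxE.
- move=> l; apply: complexI; rewrite rmorph_sum /=.
  under eq_bigr do rewrite PE.
  have := congr1 (fun M : 'M[R[i]]_n => M l l) (elimT unitarymxP Wtu); rewrite trmxCK !mxE eqxx ?mulr1n /= => h; rewrite rmorph1 -h.
  by apply: eq_bigr => k _; rewrite !mxE mulrC.
apply: complexI.
rewrite /frob rmorph_sum /=.
transitivity (\sum_i \sum_j \sum_k \sum_l
   ((U k i)^* * (da k)%:C * U k j) * ((V l j)^* * (db l)%:C * V l i)).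
  apply: eq_bigr => i _; rewrite rmorph_sum /=; apply: eq_bigr => j _.
  rewrite rmorphM /=.
  have -> : rc (A i j) = map_mx rc A i j by rewrite mxE.
  have -> : rc (B i j) = map_mx rc B j i by rewrite mxE -{1}Bs mxE.
  rewrite hA hB !entry_conj big_distrlr /=.
  by apply: eq_bigr => k _; apply: eq_bigr => l _; rewrite ?mxE.
rewrite quad_ex rmorph_sum /=; apply: eq_bigr => k _.
rewrite rmorph_sum /=; apply: eq_bigr => l _.
rewrite !rmorphM /= PE.
have -> : W k l = \sum_j U k j * (V l j)^* by rewrite !mxE; apply: eq_bigr => j _; rewrite !mxE.
rewrite rmorph_sum big_distrlr /= mulr_sumr; apply: eq_bigr => j _.
rewrite mulr_sumr; apply: eq_bigr => i _.
rewrite rmorphM /= conjCK; ring.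
Qed.

End Cx.

Theorem proposition2p1 (R : realType) (n k : nat) (hk1 : (1 <= k)%N) (hkn : (k <= n)%N)
  (A B : 'M[R]_n) (lA lB : 'I_n -> R) :
  sym_mx A -> sym_mx B ->
  eigvec_of A lA -> eigvec_of B lB ->
  Gamma k lA -> Gamma_dual k lB ->
  rho k lA * rho_dual k lB <= (n%:R)^-1 * frob A B.
Proof.
move=> As Bs eA eB Ga Gb.
have [U [p [Uu hA]]] := spectral_real As eA.
have [V [q [Vu hB]]] := spectral_real Bs eB.
have [P [P0 Prow Pcol ->]] := frob_DS Bs Uu Vu hA hB.
exact: (real_main hk1 hkn (@perm_inj _ p) (@perm_inj _ q) P0 Prow Pcol Ga Gb).
Qed.
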